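(* Let $n\mid(q-1)$, let $\delta\ge2$, $b\ge1$, $m\ge1$ be integers with $\gcd(b,n)=1$, let $t\in\{0,\dots,n-1\}$ and let $\ell$ be an integer with $m-1+\delta\le\ell\le n-\delta$. Put $$A=\{\alpha^{t},\alpha^{t+b},\dots,\alpha^{t+(m-1)b},\alpha^{t+\ell b}\},\qquad B=\{1,\alpha^{b},\dots,\alpha^{(\delta-2)b}\},$$ and let $d_A^{\perp}$ be the minimum distance of the dual of $C_A$. Then $C_{AB}$ is a cyclic $(d_A^{\perp}-\delta+1,\delta)$-LRC over $\mathbb{F}_q$ with dimension $n-m-2\delta+3$. If moreover $\delta-2<n-m-d_A^{\perp}$, then $C_{AB}$ is an optimal $(d_A^{\perp}-\delta+1,\delta)$-LRC with minimum distance $m+\delta-1$.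
   Context: Let $q$ be a prime power and $n\mid(q-1)$, so the set $R_n$ of all $n$-th roots of unity lies in $\mathbb{F}_q$; let $\alpha\in\mathbb{F}_q$ be a primitive $n$-th root of unity. For $A,B\subseteq R_n$, $AB=\{\beta\gamma:\beta\in A,\gamma\in B\}$, and for $Z\subseteq R_n$, $C_Z$ denotes the cyclic code of length $n$ over $\mathbb{F}_q$ with complete defining set $Z$, i.e. the ideal generated by $\prod_{\beta\in Z}(x-\beta)$ in $\mathbb{F}_q[x]/(x^n-1)$, identified with a subspace of $\mathbb{F}_q^n$; it has dimension $n-|Z|$. Locality: for a linear code $C\subseteq\mathbb{F}_q^n$ and integers $r\ge1$, $\delta\ge2$, the $i$-th coordinate has $(r,\delta)$-locality if there is $S_i\subseteq\{1,\dots,n\}$ with $i\in S_i$, $|S_i|\le r+\delta-1$ such that the punctured code $C|_{S_i}$ has minimum distance at least $\delta$; $C$ is an $(r,\delta)$-LRC if every coordinate has $(r,\delta)$-locality. An $[n,k,d]$ $(r,\delta)$-LRC is optimal if $d=n-k-(\lceil k/r\rceil-1)(\delta-1)+1$ (this quantity is always an upper bound on $d$). *)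

(* Defs.v *)
From HB Require Import structures.
From mathcomp Require Import all_boot all_order all_algebra all_field.
Set Implicit Arguments. Unset Strict Implicit. Unset Printing Implicit Defensive.
Import Order.TTheory GRing.Theory Num.Theory.
Local Open Scope ring_scope.

Section Codes.
Variables (F : finFieldType) (n : nat).

Definition code := {set 'rV[F]_n}.

Definition wt (c : 'rV[F]_n) : nat := #|[set i : 'I_n | c ord0 i != 0]|.

Definition word_poly (c : 'rV[F]_n) : {poly F} := \sum_(i < n) c ord0 i *: 'X^i.

Definition gen_poly (Z : {set F}) : {poly F} := \prod_(z in Z) ('X - z%:P).

(* elements of F[x]/(x^n-1) are represented by polynomials of degree < n,
   i.e. by word_poly f for f in F^n. *)
(* C_Z : the ideal generated by gen_poly Z in F[x]/(x^n - 1), viewed in F^n *)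
Definition cyclic_code (Z : {set F}) : code :=
  [set c : 'rV[F]_n | [exists f : 'rV[F]_n,
      word_poly c == (gen_poly Z * word_poly f) %% ('X^n - 1)]].

Definition code_dim (C : code) : nat := \dim <<enum C>>%VS.

(* minimum distance: least weight of a nonzero codeword (n if none) *)
Definition min_dist (C : code) : nat :=
  \big[minn/n]_(c in C | c != 0) wt c.

Definition dual_code (C : code) : code :=
  [set y : 'rV[F]_n | [forall c in C, \sum_(i < n) c ord0 i * y ord0 i == 0]].

(* The i-th coordinate has (r,delta)-locality: some S containing i with
   |S| <= r + delta - 1 such that the punctured code C|_S has minimum
   distance >= delta (every nonzero word of C|_S has weight >= delta). *)
Definition has_locality (C : code) (r delta : nat) (i : 'I_n) : Prop :=
  exists S : {set 'I_n}, [/\ i \in S, (#|S| <= r + delta - 1)%N &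
    forall c, c \in C -> [exists j in S, c ord0 j != 0%R] ->
      (delta <= #|[set j in S | c ord0 j != 0%R]|)%N].

Definition is_LRC (C : code) (r delta : nat) : Prop :=
  [/\ (1 <= r)%N, (2 <= delta)%N & forall i : 'I_n, has_locality C r delta i].

(* optimal [n,k,d] (r,delta)-LRC: d = n - k - (ceil(k/r) - 1)(delta - 1) + 1 *)
Definition is_optimal_LRC (C : code) (r delta : nat) : Prop :=
  is_LRC C r delta /\
  (min_dist C)%:Z = n%:Z - (code_dim C)%:Z
     - (((code_dim C + r - 1) %/ r)%N%:Z - 1) * (delta%:Z - 1) + 1.

End Codes.

Definition set_mul (F : finFieldType) (A B : {set F}) : {set F} :=
  [set x * y | x in A, y in B].

(* Main.v *)
Require Import Defs.
From HB Require Import structures.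
From mathcomp Require Import all_boot all_order all_algebra all_field zify ring.
Set Implicit Arguments. Unset Strict Implicit. Unset Printing Implicit Defensive.
Import Order.TTheory GRing.Theory Num.Theory.
Local Open Scope ring_scope.

Section Gen.
Variables (F : finFieldType) (n : nat).
Implicit Types (c : 'rV[F]_n).

Lemma coef_word_small c (j : 'I_n) : (word_poly c)`_j = c ord0 j.
Proof.
rewrite /word_poly coef_sum (bigD1 j) //= coefZ coefXn eqxx mulr1 big1 ?addr0 //.
by move=> i ij; rewrite coefZ coefXn eq_sym (inj_eq val_inj) (negbTE ij) mulr0.
Qed.

Lemma coef_word_large c j : (n <= j)%N -> (word_poly c)`_j = 0.
Proof.
move=> nj; rewrite /word_poly coef_sum big1 // => i _.
rewrite coefZ coefXn; case: eqP => [ji|]; last by rewrite mulr0.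
by move: (ltn_ord i); rewrite -ji ltnNge nj.
Qed.

Lemma horner_word c z : (word_poly c).[z] = \sum_(i < n) c ord0 i * z ^+ i.
Proof.
rewrite /word_poly horner_sum; apply: eq_bigr => i _.
by rewrite hornerZ hornerXn.
Qed.

Lemma size_word c : (size (word_poly c) <= n)%N.
Proof. by apply/leq_sizeP => j; apply: coef_word_large. Qed.

Lemma cyclic_codeP (Z : {set F}) c : (0 < n)%N -> (forall z, z \in Z -> z ^+ n = 1) ->
  (c \in cyclic_code n Z) = [forall z in Z, \sum_(i < n) c ord0 i * z ^+ i == 0].
Proof.
move=> n0 Zr; apply/idP/idP.
- rewrite inE => /existsP[f /eqP Ec]; apply/forallP => z; apply/implyP => zZ.
  rewrite -horner_word Ec.
  set d := (X in _ %% X); set p := gen_poly Z * word_poly f.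
  have dz : d.[z] = 0 by rewrite /d !hornerE Zr // subrr.
  apply/eqP.
  have pz : p.[z] = 0.
    rewrite /p hornerM /gen_poly horner_prod (bigD1 z) //= !hornerE subrr.
    by rewrite !mul0r.
  have := congr1 (fun q => q.[z]) (divp_eq p d).
  by rewrite /= pz hornerD hornerM dz mulr0 add0r => <-.
- move=> /forallP H.
  have rts : all (root (word_poly c)) (enum Z).
    apply/allP => z; rewrite mem_enum => zZ.
    by rewrite /root horner_word; have /implyP := H z; apply.
  have urs : uniq_roots (enum Z) by rewrite uniq_rootsE enum_uniq.
  have [q Eq] := uniq_roots_prod_XsubC rts urs.
  rewrite big_enum /= -/(gen_poly Z) in Eq.
  have gn0 : gen_poly Z != 0 by rewrite monic_neq0 // monic_prod_XsubC.
  have sq : (size q <= n)%N.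
    have [->|qn0] := eqVneq q 0; first by rewrite size_poly0.
    have Hs := size_mul qn0 gn0.
    apply: leq_trans (size_word c); rewrite Eq Hs.
    have gs : (0 < size (gen_poly Z))%N by rewrite size_poly_gt0.
    rewrite -(prednK gs) addnS /=. exact: leq_addr.
  rewrite inE; apply/existsP; exists (\row_(i < n) q`_i).
  have -> : word_poly (\row_(i < n) q`_i) = q.
    apply/polyP => i; case: (ltnP i n) => [lin|ni].
      by rewrite (coef_word_small _ (Ordinal lin)) mxE.
    by rewrite coef_word_large //; move: ni => /(leq_trans sq) /leq_sizeP ->.
  rewrite mulrC -Eq modp_small //.
  rewrite -polyC1 size_XnsubC //; exact: leq_ltn_trans (size_word c) _.
Qed.


Definition Hm p (z : 'I_p -> F) : 'M[F]_(p, n) := \matrix_(k, j) z k ^+ j.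

Lemma Hm_code p (z : 'I_p -> F) c : (0 < n)%N -> (forall k, z k ^+ n = 1) ->
  (c \in cyclic_code n [set z k | k : 'I_p]) = (c *m (Hm z)^T == 0).
Proof.
move=> n0 zr; rewrite cyclic_codeP //; last by move=> x /imsetP[k _ ->].
apply/forallP/eqP => [H|H].
- apply/rowP => k; rewrite !mxE.
  have zk : z k \in [set z k | k : 'I_p] by apply: imset_f.
  have /implyP/(_ zk)/eqP E := H (z k).
  rewrite -[RHS]E. by apply: eq_bigr => j _; rewrite !mxE.
- move=> x; apply/implyP => /imsetP[k _ ->].
  have := congr1 (fun M : 'M[F]_(1,p) => M ord0 k) H; rewrite !mxE => E.
  rewrite -[X in _ == X]E.
  by apply/eqP; apply: eq_bigr => j _; rewrite !mxE.
Qed.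

Lemma dual_rep p (z : 'I_p -> F) y : (0 < n)%N -> (forall k, z k ^+ n = 1) ->
  y \in dual_code (cyclic_code n [set z k | k : 'I_p]) -> (y <= Hm z)%MS.
Proof.
move=> n0 zr; rewrite inE => /forallP Hy.
set K := kermx (Hm z)^T.
have yK : (y <= kermx K^T)%MS.
  rewrite sub_kermx -[y]trmxK -trmx_mul trmx_eq0; apply/eqP/colP => i; rewrite !mxE.
  have cK : row i K \in cyclic_code n [set z k | k : 'I_p].
    by rewrite Hm_code // -row_mul mulmx_ker row0.
  have /implyP/(_ cK)/eqP E := Hy (row i K).
  rewrite -[RHS]E; apply: eq_bigr => j _; rewrite !mxE //.
have HK : (Hm z <= kermx K^T)%MS.
  by rewrite sub_kermx -[Hm z]trmxK -trmx_mul mulmx_ker trmx0.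
apply: submx_trans yK _.
have := (mxrank_leqif_sup HK).2; move=> <-.
rewrite mxrank_ker mxrank_tr mxrank_ker mxrank_tr subKn //.
exact: rank_leq_col.
Qed.


Lemma Hm_row_full p (z : 'I_p -> F) : injective z -> (p <= n)%N -> row_full (Hm z)^T.
Proof.
move=> zi pn; rewrite /row_full eqn_leq rank_leq_col /=.
pose P : 'M[F]_(p, n) := \matrix_(i, j) (i == j :> nat)%:R.
apply: (@leq_trans (\rank (P *m (Hm z)^T))); last exact: mxrankM_maxr.
  have -> : P *m (Hm z)^T = Vandermonde p (\row_k z k).
    apply/matrixP => i k; rewrite !mxE.
    have lin : (i < n)%N by apply: leq_trans (ltn_ord i) pn.
    rewrite (bigD1 (Ordinal lin)) //= !mxE eqxx mul1r big1 ?addr0 // => j ji.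
    rewrite !mxE; case: eqP => [E|]; last by rewrite mul0r.
    by case/eqP: ji; apply: val_inj; rewrite /= E.
  rewrite mxrank_unit //; rewrite unitmxE det_Vandermonde unitfE.
  apply/prodf_neq0 => i _; apply/prodf_neq0 => j ij; rewrite !mxE subr_eq0.
  by apply/eqP => /zi E; move: ij; rewrite E ltnn.
Qed.

Lemma code_dim_Hm p (z : 'I_p -> F) : (0 < n)%N -> (forall k, z k ^+ n = 1) ->
  injective z -> (p <= n)%N ->
  code_dim (cyclic_code n [set z k | k : 'I_p]) = (n - p)%N.
Proof.
move=> n0 zr zi pn.
set M := (Hm z)^T.
pose f : 'Hom('rV[F]_n, 'rV[F]_p) := linfun (mulmxr M).
have Esp : <<enum (cyclic_code n [set z k | k : 'I_p])>>%VS = lker f.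
  apply/subv_anti/andP; split.
    apply/span_subvP => c; rewrite mem_enum Hm_code // memv_ker lfunE.
    by [].
  apply/subvP => c; rewrite memv_ker lfunE /= => cM; apply: memv_span.
  by rewrite mem_enum Hm_code.
have Eim : limg f = fullv.
  apply/eqP; rewrite eqEdim subvf /=; apply: dimvS; apply/subvP => v _.
  have [B BM] := row_fullP (Hm_row_full zi pn).
  apply/memv_imgP; exists (v *m B); first exact: memvf.
  by rewrite lfunE /= -mulmxA BM mulmx1.
rewrite /code_dim Esp.
have := limg_ker_dim f fullv; rewrite capfv Eim !dimvf /dim /= !mul1n.
by move=> E; apply: (@addIn p); rewrite E subnK.
Qed.


Lemma bch (c : 'rV[F]_n) (x w : 'I_n -> F) D : injective x -> (forall i, w i != 0) ->
  (forall j, (j < D)%N -> \sum_i c ord0 i * w i * x i ^+ j = 0) -> c != 0 ->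
  (D < wt c)%N.
Proof.
move=> xi wn0 H cn0; rewrite ltnNge; apply/negP => wD.
set J := [set i | c ord0 i != 0].
have wJ : wt c = #|J| by [].
pose e := enum_val (A := J).
pose W : 'M[F]_#|J| := \matrix_(j, k) (x (e k) ^+ j * w (e k)).
pose u : 'cV[F]_#|J| := \col_k c ord0 (e k).
have Wu : W *m u = 0.
  apply/colP => j; rewrite !mxE.
  have jD : (j < D)%N by apply: leq_trans (ltn_ord j) _; rewrite -wJ.
  rewrite -[RHS](H j jD) (bigID (mem J)) /= [X in _ = _ + X]big1 ?addr0; last first.
    by move=> i; rewrite inE negbK => /eqP ->; rewrite !mul0r.
  rewrite (big_enum_val (fun i => c ord0 i * w i * x i ^+ j)) /=.
  by apply: eq_bigr => k _; rewrite !mxE /e mulrC [_ * w _]mulrC mulrA.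
have Wunit : W \in unitmx.
  have -> : W = Vandermonde #|J| (\row_k x (e k)) *m diag_mx (\row_k w (e k)).
    by apply/matrixP => j k; rewrite mul_mx_diag !mxE.
  rewrite unitmxE det_mulmx det_diag det_Vandermonde unitfE mulf_neq0 //.
    apply/prodf_neq0 => i _; apply/prodf_neq0 => j ij; rewrite !mxE subr_eq0.
    by apply/eqP => /xi/enum_val_inj E; move: ij; rewrite E ltnn.
  by apply/prodf_neq0 => i _; rewrite mxE.
have u0 : u = 0 by rewrite -[u]mul1mx -(mulVmx Wunit) -mulmxA Wu mulmx0.
move: cn0; apply/negP; rewrite negbK; apply/eqP/rowP => i; rewrite mxE.
apply/eqP; apply/negPn/negP => ci.
have iJ : i \in J by rewrite inE.
have := congr1 (fun M : 'cV[F]_#|J| => M (enum_rank_in iJ i) ord0) u0.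
by rewrite !mxE /e enum_rankK_in //; move/eqP; rewrite (negbTE ci).
Qed.


Lemma exists_zero_on p (M : 'M[F]_(n, p)) (T : {set 'I_n}) : (p + #|T| < n)%N ->
  exists c : 'rV[F]_n, [/\ c != 0, c *m M = 0 & forall j, j \in T -> c ord0 j = 0].
Proof.
move=> hT.
pose E : 'M[F]_(n, #|T|) := \matrix_(j, u) (j == enum_val u)%:R.
pose N := row_mx M E.
set K := kermx N.
have Kn0 : K != 0.
  rewrite -mxrank_eq0 /K mxrank_ker -lt0n subn_gt0.
  by apply: leq_ltn_trans (rank_leq_col _) hT.
have [i ci] : exists i, row i K != 0.
  apply/existsP; move: Kn0; apply: contraR; rewrite negb_exists => /forallP H.
  by apply/eqP/row_matrixP => i; rewrite row0; apply/eqP/negPn.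
have cN : row i K *m N = 0 by rewrite -row_mul mulmx_ker row0.
move: cN; rewrite mul_mx_row => /eqP; rewrite row_mx_eq0 => /andP[/eqP cM /eqP cE].
move: (row i K) ci cM cE => c ci cM cE.
exists c; split => // j jT.
have := congr1 (fun X : 'rV[F]_#|T| => X ord0 (enum_rank_in jT j)) cE.
rewrite !mxE (bigD1 j) //= !mxE enum_rankK_in // eqxx mulr1 big1 ?addr0 //.
move=> k kj; rewrite !mxE enum_rankK_in // (negbTE kj) mulr0 //.
Qed.


Lemma wt_le c : (wt c <= n)%N.
Proof. by rewrite /wt; apply: leq_trans (max_card _) _; rewrite card_ord. Qed.

Lemma min_dist_ge (C : code F n) L : (L <= n)%N ->
  (forall c, c \in C -> c != 0 -> (L <= wt c)%N) -> (L <= min_dist C)%N.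
Proof.
move=> Ln H; rewrite /min_dist; elim/big_ind: _ => //.
  by move=> a b La Lb; rewrite leq_min La Lb.
by move=> c /andP[cC cn0]; apply: H.
Qed.

Lemma bigmin_le (I : eqType) (r : seq I) (P : pred I) (f : I -> nat) d i :
  i \in r -> P i -> (\big[minn/d]_(j <- r | P j) f j <= f i)%N.
Proof.
elim: r => // j r IH; rewrite inE big_cons => /predU1P[-> Pi|ir Pi].
  by rewrite Pi geq_minl.
by case: (P j); [rewrite geq_min IH ?orbT | apply: IH].
Qed.

Lemma min_dist_le (C : code F n) c : c \in C -> c != 0 -> (min_dist C <= wt c)%N.
Proof.
by move=> cC cn0; rewrite /min_dist; apply: bigmin_le; rewrite ?mem_index_enum ?cC.
Qed.

Lemma min_dist_att (C : code F n) c0 : c0 \in C -> c0 != 0 ->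
  exists c, [/\ c \in C, c != 0 & wt c = min_dist C].
Proof.
move=> c0C c0n0.
have : min_dist C = n \/ exists c, [/\ c \in C, c != 0 & wt c = min_dist C].
  rewrite /min_dist; elim/big_ind: _; first by left.
    move=> a b Ha Hb; rewrite /minn; case: ltnP => _; [exact: Ha | exact: Hb].
  by move=> c /andP[cC cn0]; right; exists c.
case=> // E; exists c0; split => //; apply/eqP.
by rewrite eqn_leq min_dist_le // andbT E wt_le.
Qed.

Lemma set_between (T : finType) (X Y : {set T}) s :
  X \subset Y -> (#|X| <= s)%N -> (s <= #|Y|)%N ->
  exists Z : {set T}, [/\ X \subset Z, Z \subset Y & #|Z| = s].
Proof.
move=> XY; elim: s => [|s IH] Xs sY.
  by exists X; split => //; apply/eqP; rewrite -leqn0.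
have [Xe|Xs'] := eqVneq #|X| s.+1; first by exists X; split.
have {Xs'} Xs' : (#|X| <= s)%N by rewrite -ltnS ltn_neqAle Xs' Xs.
have [Z [XZ ZY cZ]] := IH Xs' (ltnW sY).
have : exists y, y \in Y :\: Z.
  apply/set0Pn; rewrite -card_gt0 cardsD; move: ZY => /setIidPr ->.
  by rewrite cZ subn_gt0.
case=> y; rewrite inE => /andP[yZ yY].
exists (y |: Z); split.
- exact: subset_trans XZ (subsetUr _ _).
- by rewrite subUset sub1set yY.
- by rewrite cardsU1 yZ cZ.
Qed.

End Gen.

Section Main.
Variables (F : finFieldType) (n : nat) (alpha : F) (delta b m t l : nat).
Hypotheses (prim : n.-primitive_root alpha) (d2 : (2 <= delta)%N) (m1 : (1 <= m)%N)
  (cop : coprime b n) (hl1 : (m - 1 + delta <= l)%N) (hl2 : (l <= n - delta)%N).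

Lemma n0 : (0 < n)%N. Proof. exact: prim_order_gt0 prim. Qed.
Definition g := alpha ^+ b.
Definition a := alpha ^+ t.
Lemma pg : n.-primitive_root g.
Proof. by rewrite /g prim_root_exp_coprime. Qed.
Lemma ginj i j : (i < n)%N -> (j < n)%N -> g ^+ i = g ^+ j -> i = j.
Proof.
move=> ilt jlt /eqP; rewrite (eq_prim_root_expr pg) !modn_small //.
by move/eqP.
Qed.
Lemma alpha_n k : (alpha ^+ k) ^+ n = 1.
Proof. by rewrite exprAC (prim_expr_order prim) expr1n. Qed.
Lemma g_n k : (g ^+ k) ^+ n = 1.
Proof. by rewrite exprAC (prim_expr_order pg) expr1n. Qed.
Lemma alpha_n0 : alpha != 0.
Proof.
apply/eqP => a0; have := prim_expr_order prim; rewrite a0 expr0n.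
by move: n0; case: n => // k _ /= /eqP; rewrite eq_sym oner_eq0.
Qed.
Lemma a_n0 : a != 0. Proof. by rewrite /a expf_neq0 // alpha_n0. Qed.
Lemma g_n0 : g != 0. Proof. by rewrite /g expf_neq0 // alpha_n0. Qed.
Lemma ag_n k : (a * g ^+ k) ^+ n = 1.
Proof. by rewrite exprMn /a alpha_n g_n mulr1. Qed.
Lemma ltl : (l < n)%N. Proof. lia. Qed.
Lemma mltl : (m + delta - 2 < l)%N. Proof. lia. Qed.

Definition eA (k : 'I_m.+1) : nat := if (k < m)%N then nat_of_ord k else l.
Definition zA k := a * g ^+ eA k.
Definition Aset : {set F} := [set alpha ^+ (t + i * b) | i : 'I_m] :|: [set alpha ^+ (t + l * b)].
Definition Bset : {set F} := [set alpha ^+ (j * b) | j : 'I_(delta - 1)].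

Lemma alpha_tb i : alpha ^+ (t + i * b) = a * g ^+ i.
Proof. by rewrite exprD /a /g mulnC exprM. Qed.

Lemma AsetE : Aset = [set zA k | k : 'I_m.+1].
Proof.
apply/setP => x; rewrite !inE; apply/idP/imsetP.
- case/orP => [/imsetP[i _ ->]|/eqP ->].
    exists (widen_ord (leqnSn m) i) => //; rewrite /zA /eA /= ltn_ord alpha_tb //.
  by exists ord_max => //; rewrite /zA /eA /= ltnn alpha_tb.
- case=> k _ ->; rewrite /zA /eA; case: ifP => km.
    by apply/orP; left; apply/imsetP; exists (Ordinal km) => //; rewrite alpha_tb.
  by rewrite alpha_tb eqxx orbT.
Qed.

Lemma BsetE : Bset = [set g ^+ j | j : 'I_(delta - 1)].
Proof. by apply: eq_imset => j; rewrite /g mulnC exprM. Qed.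

Definition eAB (k : 'I_(m + 2 * delta - 3)) : nat :=
  if (k < m + delta - 2)%N then nat_of_ord k else (k - (m + delta - 2) + l)%N.
Definition zAB k := a * g ^+ eAB k.

Lemma eAB_lt k : (eAB k < n)%N.
Proof. rewrite /eAB; case: ifP => h; have := ltn_ord k; move=> ?. all: lia. Qed.

Lemma eAB_inj : injective eAB.
Proof.
move=> i j; rewrite /eAB => E; apply: val_inj => /=.
move: E; case: ifP; case: ifP => ? ? ; lia.
Qed.

Lemma zAB_inj : injective zAB.
Proof.
move=> i j /(mulfI a_n0) /ginj E; apply: eAB_inj; apply: E; exact: eAB_lt.
Qed.

Lemma ABE : set_mul Aset Bset = [set zAB k | k : 'I_(m + 2 * delta - 3)].
Proof.
rewrite /set_mul AsetE BsetE; apply/setP => x; apply/imset2P/imsetP.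
- case=> _ _ /imsetP[k _ ->] /imsetP[j _ ->] ->.
  rewrite /zA -mulrA -exprD /zAB /=.
  have hj := ltn_ord j; have hk := ltn_ord k.
  case: (ltnP k m) => km.
    have h : (k + j < m + 2 * delta - 3)%N by lia.
    exists (Ordinal h) => //; congr (_ * g ^+ _); rewrite /eA /eAB /= km.
    case: ifP => //; lia.
  have h : (m + delta - 2 + j < m + 2 * delta - 3)%N by lia.
  exists (Ordinal h) => //; congr (_ * g ^+ _); rewrite /eA /eAB /=.
  have -> : (k < m)%N = false by apply/negbTE; rewrite -leqNgt.
  case: ifP => ?; lia.
- case=> k _ ->; rewrite /zAB /eAB; have hk := ltn_ord k.
  case: ifP => kl.
    have hi : (minn k (m - 1) < m.+1)%N by lia.
    have hj : (k - minn k (m - 1) < delta - 1)%N by lia.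
    exists (zA (Ordinal hi)) (g ^+ (k - minn k (m - 1))).
    + by apply/imsetP; exists (Ordinal hi).
    + by apply/imsetP; exists (Ordinal hj).
    rewrite /zA /eA /= -mulrA -exprD; congr (_ * g ^+ _).
    case: ifP => ?; lia.
  have hj : (k - (m + delta - 2) < delta - 1)%N by lia.
  exists (zA ord_max) (g ^+ (k - (m + delta - 2))).
  + by apply/imsetP; exists ord_max.
  + by apply/imsetP; exists (Ordinal hj).
  rewrite /zA /eA /= ltnn -mulrA -exprD; congr (_ * g ^+ _); lia.
Qed.


Lemma zAB_n k : zAB k ^+ n = 1. Proof. exact: ag_n. Qed.
Lemma zA_n k : zA k ^+ n = 1. Proof. exact: ag_n. Qed.
Lemma lenAB : (m + 2 * delta - 3 <= n)%N. Proof. lia. Qed.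

Definition CC := cyclic_code n (set_mul Aset Bset).

Lemma CC_mem c : (c \in CC) = (c *m (Hm n zAB)^T == 0).
Proof. by rewrite /CC ABE Hm_code //; [exact: n0 | exact: zAB_n]. Qed.

Lemma dimCC : code_dim CC = (n - (m + 2 * delta - 3))%N.
Proof.
rewrite /CC ABE code_dim_Hm //; [exact: n0|exact: zAB_n|exact: zAB_inj|exact: lenAB].
Qed.

Lemma CC_zero c x : c \in CC -> x \in set_mul Aset Bset -> \sum_(i < n) c ord0 i * x ^+ i = 0.
Proof.
rewrite /CC cyclic_codeP; last 2 first.
- exact: n0.
- by rewrite ABE => z /imsetP[k _ ->]; exact: zAB_n.
by move=> /forallP/(_ x)/implyP H xAB; apply/eqP; apply: H.
Qed.

Lemma zAg_mem k (j : 'I_(delta - 1)) : zA k * g ^+ j \in set_mul Aset Bset.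
Proof.
rewrite /set_mul; apply/imset2P; exists (zA k) (g ^+ j) => //.
  by rewrite AsetE; apply: imset_f.
by rewrite BsetE; apply: imset_f.
Qed.

Lemma ag_mem k : (k < m + delta - 2)%N -> a * g ^+ k \in set_mul Aset Bset.
Proof.
move=> km; have h : (k < m + 2 * delta - 3)%N by lia.
rewrite ABE; apply/imsetP; exists (Ordinal h) => //.
by rewrite /zAB /eAB /= km.
Qed.

Definition rep (y : 'rV[F]_n) :=
  exists lam : 'I_m.+1 -> F, forall j : 'I_n, y ord0 j = \sum_k lam k * zA k ^+ j.

Lemma dual_rep_A y : y \in dual_code (cyclic_code n Aset) -> rep y.
Proof.
rewrite AsetE => /dual_rep => /(_ n0 zA_n) /submxP[D ->].
by exists (fun k => D ord0 k) => j; rewrite !mxE; apply: eq_bigr => k _; rewrite !mxE.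
Qed.

Lemma size_sumX p (e : 'I_p -> nat) (lam : 'I_p -> F) N : (forall k, e k < N)%N ->
  (size (\sum_k lam k *: 'X^(e k))%R <= N)%N.
Proof.
move=> eN; apply/leq_sizeP => j Nj; rewrite coef_sum big1 // => k _.
rewrite coefZ coefXn; case: eqP => [E|]; last by rewrite mulr0.
by have := eN k; rewrite -E ltnNge Nj.
Qed.

Lemma horner_sumX p (e : 'I_p -> nat) (lam : 'I_p -> F) x :
  (\sum_k lam k *: 'X^(e k)).[x] = \sum_k lam k * x ^+ e k.
Proof. by rewrite horner_sum; apply: eq_bigr => k _; rewrite hornerZ hornerXn. Qed.

Lemma few_zeros (y : 'rV[F]_n) (Q : {poly F}) N : y != 0 ->
  (forall j : 'I_n, y ord0 j = 0 -> root Q (g ^+ j)) -> (Q = 0 -> y = 0) ->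
  (size Q <= N)%N -> (n < wt y + N)%N.
Proof.
move=> yn0 Hr HQ sQ.
have Qn0 : Q != 0 by apply: contra yn0 => /eqP /HQ ->.
set Zs := [set j : 'I_n | y ord0 j == 0].
pose rs := [seq g ^+ (nat_of_ord j) | j <- enum Zs].
have urs : uniq rs.
  rewrite map_inj_in_uniq ?enum_uniq // => i j _ _ /ginj E.
  by apply: val_inj; apply: E.
have ars : all (root Q) rs.
  apply/allP => x /mapP[j]; rewrite mem_enum inE => /eqP yj ->.
  exact: Hr.
have := max_poly_roots Qn0 ars urs; rewrite size_map -cardE => ZQ.
have : (wt y + #|Zs| = n)%N.
  rewrite /wt -[RHS]card_ord -(cardsC [set i | y ord0 i != 0]); congr (_ + _)%N.
  by apply: eq_card => j; rewrite !inE negbK.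
move=> E; rewrite -{1}E ltn_add2l; exact: leq_trans ZQ sQ.
Qed.

Lemma rep_wt y : rep y -> y != 0 -> (n - l <= wt y)%N /\ (l - m + 1 <= wt y)%N.
Proof.
case=> lam Hy yn0.
pose Q1 := \sum_k lam k *: 'X^(eA k).
pose eA2 (k : 'I_m.+1) := if (k < m)%N then (nat_of_ord k + (n - l))%N else 0%N.
pose Q2 := \sum_k lam k *: 'X^(eA2 k).
have yE j : y ord0 j = a ^+ j * Q1.[g ^+ j].
  rewrite Hy horner_sumX mulr_sumr; apply: eq_bigr => k _.
  by rewrite /zA exprMn mulrCA; congr (_ * (_ * _)); exact: exprAC.
have Q2E j : Q2.[g ^+ j] = (g ^+ j) ^+ (n - l) * Q1.[g ^+ j].
  rewrite !horner_sumX mulr_sumr; apply: eq_bigr => k _.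
  rewrite mulrCA -exprD /eA2 /eA; case: ifP => km; first by rewrite addnC.
  by rewrite subnK ?(ltnW ltl) // g_n expr0.
have r1 j : y ord0 j = 0 -> root Q1 (g ^+ j).
  by rewrite yE => /eqP; rewrite mulf_eq0 expf_eq0 (negbTE a_n0) andbF.
have y0 : (forall j, Q1.[g ^+ j] = 0) -> y = 0.
  by move=> H; apply/rowP => j; rewrite mxE yE H mulr0.
split.
- have := few_zeros yn0 r1 _ (_ : size Q1 <= l.+1)%N.
  have H1 : Q1 = 0 -> y = 0 by move=> Q0; apply: y0 => j; rewrite Q0 horner0.
  have H2 : (size Q1 <= l.+1)%N.
    apply: size_sumX => k; rewrite /eA; case: ifP => km //=; lia.
  move=> /(_ H1 H2); lia.
- have r2 j : y ord0 j = 0 -> root Q2 (g ^+ j).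
    by move=> /r1 /rootP H; apply/rootP; rewrite Q2E H mulr0.
  have H1 : Q2 = 0 -> y = 0.
    move=> Q0; apply: y0 => j; have := Q2E j; rewrite Q0 horner0 => /esym/eqP.
    by rewrite mulf_eq0 !expf_eq0 (negbTE alpha_n0) !andbF /= => /eqP.
  have H2 : (size Q2 <= n - l + m)%N.
    apply: size_sumX => k; rewrite /eA2; case: ifP => km /=; have := ltl; lia.
  have := few_zeros yn0 r2 H1 H2; have := ltl; lia.
Qed.


Definition DA := dual_code (cyclic_code n Aset).

Lemma Aset_n x : x \in Aset -> x ^+ n = 1.
Proof. by rewrite AsetE => /imsetP[k _ ->]; exact: zA_n. Qed.

Lemma y0_mem : (\row_(j < n) zA ord0 ^+ j) \in DA.
Proof.
rewrite inE; apply/forallP => c; apply/implyP.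
rewrite cyclic_codeP ?n0 //; last exact: Aset_n.
move=> /forallP/(_ (zA ord0))/implyP; rewrite AsetE imset_f // => /(_ isT) /eqP H.
by apply/eqP; rewrite -[RHS]H; apply: eq_bigr => j _; rewrite mxE.
Qed.

Lemma y0_n0 : (\row_(j < n) zA ord0 ^+ j) != 0.
Proof.
apply/eqP => /rowP/(_ (Ordinal n0)); rewrite !mxE expr0 => /eqP.
by rewrite oner_eq0.
Qed.

Lemma dA_bounds : (n - l <= min_dist DA)%N /\ (l - m + 1 <= min_dist DA)%N.
Proof.
split; apply: min_dist_ge; try lia; move=> y /dual_rep_A yr yn0;
  by have [] := rep_wt yr yn0.
Qed.

Lemma loc_rep y c : rep y -> c \in CC ->
  [exists j in [set j | y ord0 j != 0], c ord0 j != 0] ->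
  (delta <= #|[set j in [set j | y ord0 j != 0%R] | c ord0 j != 0%R]|)%N.
Proof.
case=> lam Hy cC /existsP[j0 /andP[j0S cj0]].
pose z := \row_(i < n) (c ord0 i * y ord0 i).
have zn0 : z != 0.
  apply/eqP => /rowP/(_ j0); rewrite !mxE => /eqP; rewrite mulf_eq0 (negbTE cj0) /=.
  by move: j0S; rewrite inE => /negbTE ->.
have := @bch F n z (fun i => g ^+ i) (fun _ => 1) (delta - 1).
have xinj : injective (fun i : 'I_n => g ^+ i).
  by move=> i j /ginj E; apply: val_inj; apply: E.
move=> /(_ xinj (fun _ => oner_neq0 _)) H.
have : (delta - 1 < wt z)%N.
  apply: H => // j jd; rewrite (eq_bigr (fun i => \sum_k lam k * (c ord0 i * (zA k * g ^+ j) ^+ i))).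
    rewrite exchange_big big1 // => k _; rewrite -mulr_sumr.
    by rewrite (CC_zero cC (zAg_mem k (Ordinal jd))) mulr0.
  move=> i _; rewrite mxE mulr1 Hy mulr_sumr mulr_suml; apply: eq_bigr => k _.
  rewrite /zA !exprMn (exprAC g i j); ring.
have -> : wt z = #|[set j in [set j | y ord0 j != 0%R] | c ord0 j != 0%R]|.
  by apply: eq_card => i; rewrite !inE mxE mulf_eq0 negb_or andbC.
lia.
Qed.

Definition shift (y : 'rV[F]_n) (d : nat) : 'rV[F]_n :=
  \row_(j < n) y ord0 (Ordinal (ltn_pmod (j + d) n0)).

Lemma shift_rep y d : rep y -> rep (shift y d).
Proof.
case=> lam Hy; exists (fun k => lam k * zA k ^+ d) => j.
rewrite mxE Hy; apply: eq_bigr => k _ /=.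
by rewrite expr_mod ?zA_n // exprD; ring.
Qed.

Lemma shift_wt y d : (wt (shift y d) <= wt y)%N.
Proof.
rewrite /wt.
pose f (j : 'I_n) := Ordinal (ltn_pmod (j + d) n0).
have finj : injective f.
  move=> i j /(congr1 val) /= /eqP; rewrite eqn_modDr !modn_small // => /eqP E.
  exact: val_inj.
rewrite -(card_imset _ finj); apply: subset_leq_card; apply/subsetP => x.
by case/imsetP => j; rewrite !inE mxE => jn ->.
Qed.



Lemma delta_le_dA : (delta <= min_dist DA)%N.
Proof. have [h _] := dA_bounds; lia. Qed.

Lemma CC_lower : (m + delta - 1 <= min_dist CC)%N.
Proof.
apply: min_dist_ge; first lia.
move=> c cC cn0.
have xinj : injective (fun i : 'I_n => g ^+ i).
  by move=> i j /ginj E; apply: val_inj; apply: E.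
have wn0 : forall i : 'I_n, a ^+ i != 0 by move=> i; rewrite expf_neq0 // a_n0.
have := @bch F n c (fun i => g ^+ i) (fun i => a ^+ i) (m + delta - 2) xinj wn0.
have H : forall j, (j < m + delta - 2)%N -> \sum_i c ord0 i * a ^+ i * (g ^+ i) ^+ j = 0.
  move=> j jl; rewrite -[RHS](CC_zero cC (ag_mem jl)); apply: eq_bigr => i _.
  by rewrite exprMn (exprAC g) mulrA.
by move=> /(_ H cn0); lia.
Qed.

Lemma main_LRC : is_LRC CC (min_dist DA + 1 - delta) delta.
Proof.
have dl := delta_le_dA.
split; [lia | exact: d2 |] => i.
have [y [yD yn0 wy]] := min_dist_att y0_mem y0_n0.
have yr := dual_rep_A yD.
have [j0 yj0] : exists j0, y ord0 j0 != 0.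
  apply/existsP; move: yn0; apply: contraR; rewrite negb_exists => /forallP H.
  by apply/eqP/rowP => j; rewrite mxE; apply/eqP/negPn.
set y' := shift y (j0 + n - i).
exists [set j | y' ord0 j != 0]; split.
- rewrite inE /y' /shift mxE.
  have -> : Ordinal (ltn_pmod (i + (j0 + n - i)) n0) = j0.
    apply: val_inj => /=; have hi := ltn_ord i.
    have -> : (i + (j0 + n - i) = j0 + n)%N by lia.
    by rewrite modnDr modn_small.
  exact: yj0.
- have := shift_wt y (j0 + n - i); rewrite -/y' /wt -[#|[set _ | y ord0 _ != 0]|]/(wt y) wy.
  move=> h; apply: leq_trans h _; lia.
- by move=> c cC; apply: loc_rep => //; apply: shift_rep.
Qed.



Lemma CC_upper : (min_dist DA + delta - 2 < n - m)%N ->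
  (min_dist CC <= m + delta - 1)%N.
Proof.
move=> hyp.
have dl := delta_le_dA.
have [y [yD yn0 wy]] := min_dist_att y0_mem y0_n0.
have yr := dual_rep_A yD.
set S := [set j | y ord0 j != 0].
have cS : #|S| = min_dist DA by [].
have [D [_ DS cD]] : exists D : {set 'I_n}, [/\ set0 \subset D, D \subset S & #|D| = (delta - 1)%N].
  apply: (@set_between _ set0 S (delta - 1)); rewrite ?sub0set ?cards0 //; lia.
set S' := S :\: D.
have cS' : #|S'| = (#|S| - (delta - 1))%N.
  by rewrite cardsD; move: DS => /setIidPr; rewrite setIC => ->; rewrite cD.
have S'D : S' \subset ~: D by apply/subsetP => x; rewrite !inE => /andP[].
have cDc : #|~: D| = (n - (delta - 1))%N by rewrite cardsCs setCK card_ord cD.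
have [T [S'T TD cT]] : exists T : {set 'I_n}, [/\ S' \subset T, T \subset ~: D &
    #|T| = (n - (m + 2 * delta - 3) - 1)%N].
  apply: (@set_between _ S' (~: D) (n - (m + 2 * delta - 3) - 1)) => //;
    rewrite ?cS' ?cS ?cDc //; lia.
have hT : (m + 2 * delta - 3 + #|T| < n)%N by rewrite cT; lia.
have [v [vn0 vM vT]] := @exists_zero_on F n _ (Hm n zAB)^T T hT.
have vC : v \in CC by rewrite CC_mem vM.
have vS : forall j, j \in S -> v ord0 j = 0.
  move=> j jS; apply/eqP/negPn/negP => vj.
  have := loc_rep yr vC; rewrite -/S.
  have ex : [exists j in S, v ord0 j != 0] by apply/existsP; exists j; rewrite jS.
  move=> /(_ ex).
  have : (#|[set j in S | v ord0 j != 0%R]| <= #|D|)%N.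
    apply: subset_leq_card; apply/subsetP => x; rewrite !inE => /andP[xS vx].
    apply/negPn/negP => xD; move: vx; rewrite vT ?eqxx //.
    by apply: (subsetP S'T); rewrite !inE xD xS.
  rewrite cD => h1 h2; have := leq_trans h2 h1; lia.
have disj : [disjoint T & D].
  by rewrite -setI_eq0; apply/eqP/setP => x; rewrite !inE; apply/andP => -[/(subsetP TD)]; rewrite inE => /negbTE ->.
have cTD : #|T :|: D| = (#|T| + #|D|)%N.
  by rewrite cardsU; move: disj; rewrite -setI_eq0 => /eqP ->; rewrite cards0 subn0.
have : (wt v <= #|~: (T :|: D)|)%N.
  apply: subset_leq_card; apply/subsetP => x; rewrite !inE negb_or => vx.
  apply/andP; split; apply/negP => xi; move: vx; [rewrite vT // | rewrite vS //];
    first by rewrite eqxx.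
  - by rewrite eqxx.
  - exact: (subsetP DS).
rewrite cardsCs setCK card_ord cTD cT cD => hw.
apply: leq_trans (min_dist_le vC vn0) _; apply: leq_trans hw _; lia.
Qed.


Lemma main_all :
  (is_LRC CC (min_dist DA + 1 - delta) delta /\
   (code_dim CC)%:Z = n%:Z - m%:Z - 2 * delta%:Z + 3) /\
  (delta%:Z - 2 < n%:Z - m%:Z - (min_dist DA)%:Z ->
   is_optimal_LRC CC (min_dist DA + 1 - delta) delta /\ min_dist CC = (m + delta - 1)%N).
Proof.
have [b1 b2] := dA_bounds.
have dl := delta_le_dA.
have hn := ltl.
split; first split.
- exact: main_LRC.
- rewrite dimCC; lia.
move=> h.
have h' : (min_dist DA + delta - 2 < n - m)%N by lia.
have md : min_dist CC = (m + delta - 1)%N.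
  by apply/eqP; rewrite eqn_leq CC_upper // CC_lower.
split => //; split; first exact: main_LRC.
rewrite md dimCC.
set k := (n - (m + 2 * delta - 3))%N.
set r := (min_dist DA + 1 - delta)%N.
have -> : ((k + r - 1) %/ r = 2)%N.
  have -> : (k + r - 1 = 2 * r + (k - r - 1))%N by rewrite /k /r; lia.
  rewrite divnMDl; last by rewrite /r; lia.
  rewrite divn_small //; rewrite /k /r; lia.
rewrite /k; lia.
Qed.
End Main.

Theorem corollary4p5 (F : finFieldType) (n : nat) (alpha : F)
  (delta b m t l : nat) :
  (n %| #|F|.-1)%N ->
  n.-primitive_root alpha ->
  (2 <= delta)%N -> (1 <= b)%N -> (1 <= m)%N -> coprime b n ->
  (t < n)%N ->
  (m - 1 + delta <= l)%N -> (l <= n - delta)%N ->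
  let A : {set F} :=
    [set alpha ^+ (t + i * b) | i : 'I_m] :|: [set alpha ^+ (t + l * b)] in
  let B : {set F} := [set alpha ^+ (j * b) | j : 'I_(delta - 1)] in
  let dA := min_dist (dual_code (cyclic_code n A)) in
  let C := cyclic_code n (set_mul A B) in
  (is_LRC C (dA + 1 - delta) delta /\
   (code_dim C)%:Z = n%:Z - m%:Z - 2 * delta%:Z + 3) /\
  (delta%:Z - 2 < n%:Z - m%:Z - dA%:Z ->
   is_optimal_LRC C (dA + 1 - delta) delta /\ min_dist C = (m + delta - 1)%N).
Proof.
move=> _ prim d2 _ m1 cop _ hl1 hl2.
exact: (main_all t prim d2 m1 cop hl1 hl2).
Qed.
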